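(* Let $(\mathcal{H},\langle\cdot,\cdot\rangle)$ be an infinite-dimensional separable Hilbert space, and let $\mathsf{H}$ be a quasi-self-adjoint operator in $\mathcal{H}$ with purely real, simple, discrete spectrum, whose eigenfunctions $\{\psi_n\}_{n=1}^\infty$ form a basis of $\mathcal{H}$ that is quadratically close to some orthonormal basis $\{\chi_n\}_{n=1}^\infty$, i.e. $\sum_{n=1}^\infty\|\psi_n-\chi_n\|^2<\infty$. Let $\{\phi_n\}_{n=1}^\infty$ be the eigenfunctions of $\mathsf{H}^*$, normalised so that $\langle\psi_m,\phi_n\rangle=\delta_{nm}$ and $\|\phi_n\|=1$ for all $n,m$. Let $\Theta$ be a metric operator for $\mathsf{H}$ of the form $$\Theta=\sum_{n=1}^\infty C_n\langle\phi_n,\cdot\rangle\phi_n \quad(\text{strong limit}),$$ where $C_-\le C_n\le C_+$ for all $n$ with some constants $0<C_-\le C_+<\infty$. Then $\mathsf{I}-\Theta$ is a Hilbert–Schmidt operator if and only if $C_n=1+\alpha_n$ for a sequence $\alpha=\{\alpha_n\}_{n=1}^\infty\in\ell^2(\mathbb{N})$.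
   Context: The inner product is linear in the second entry. An operator $\mathsf{H}$ in $\mathcal{H}$ is quasi-self-adjoint if it is densely defined and there is a bounded, non-negative self-adjoint operator $\Theta:\mathcal{H}\to\mathcal{H}$ with bounded inverse such that $\mathsf{H}^*=\Theta\mathsf{H}\Theta^{-1}$; any such $\Theta$ is called a metric (operator) for $\mathsf{H}$. A sequence $\{\psi_n\}$ is a basis if every vector has a unique norm-convergent expansion $\sum c_n\psi_n$. Simple spectrum means every eigenvalue has geometric and algebraic multiplicity one; discrete spectrum means compact resolvent. *)

(* Defs.v *)
From HB Require Import structures.
From mathcomp Require Import all_boot all_order all_algebra.
From mathcomp Require Import reals.
From mathcomp Require Import complex.
Set Implicit Arguments.
Unset Strict Implicit.
Unset Printing Implicit Defensive.
Import Order.TTheory GRing.Theory Num.Theory.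
Local Open Scope ring_scope.

Section HilbertDefs.
Variables (R : realType) (V : lmodType R[i]) (ip : V -> V -> R[i]).

Definition nrm (x : V) : R := Num.sqrt (complex.Re (ip x x)).

Definition rlim (u : nat -> R) (l : R) : Prop :=
  forall e : R, 0 < e -> exists N : nat, forall n : nat, (N <= n)%N -> `|u n - l| < e.

Definition summable (u : nat -> R) : Prop :=
  exists l : R, rlim (fun n => \sum_(k < n) u k) l.

Definition vlim (u : nat -> V) (x : V) : Prop := rlim (fun n => nrm (u n - x)) 0.

Definition vseries (w : nat -> V) (x : V) : Prop :=
  vlim (fun n => \sum_(k < n) w k) x.

Definition inner_product : Prop :=
  [/\ (forall x y z : V, forall a : R[i], ip x (a *: y + z) = a * ip x y + ip x z),
      (forall x y : V, ip x y = (ip y x)^*),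
      (forall x : V, 0 <= ip x x) &
      (forall x : V, ip x x = 0 -> x = 0)].

Definition cauchy_seq (u : nat -> V) : Prop :=
  forall e : R, 0 < e -> exists N : nat,
    forall m n : nat, (N <= m)%N -> (N <= n)%N -> nrm (u m - u n) < e.

Definition complete_space : Prop :=
  forall u : nat -> V, cauchy_seq u -> exists x : V, vlim u x.

Definition separable_space : Prop :=
  exists d : nat -> V, forall (x : V) (e : R), 0 < e -> exists n : nat, nrm (x - d n) < e.

Definition infinite_dimensional : Prop :=
  forall n : nat, exists f : nat -> V, forall c : nat -> R[i],
    \sum_(k < n) c k *: f k = 0 -> forall k : nat, (k < n)%N -> c k = 0.

Definition separable_inf_dim_hilbert : Prop :=
  [/\ inner_product, complete_space, separable_space & infinite_dimensional].

Definition is_basis (psi : nat -> V) : Prop :=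
  forall x : V, exists c : nat -> R[i],
    vseries (fun k => c k *: psi k) x /\
    forall c' : nat -> R[i], vseries (fun k => c' k *: psi k) x -> c' = c.

Definition orthonormal (chi : nat -> V) : Prop :=
  forall m n : nat, ip (chi m) (chi n) = (m == n)%:R.

Definition orthonormal_basis (chi : nat -> V) : Prop :=
  orthonormal chi /\ is_basis chi.

Definition bounded_op (T : V -> V) : Prop :=
  (forall (a : R[i]) (x y : V), T (a *: x + y) = a *: T x + T y) /\
  exists M : R, forall x : V, nrm (T x) <= M * nrm x.

Definition bounded_selfadjoint (T : V -> V) : Prop :=
  bounded_op T /\ forall x y : V, ip (T x) y = ip x (T y).

Definition nonnegative_op (T : V -> V) : Prop := forall x : V, 0 <= ip x (T x).

Definition has_bounded_inverse (T : V -> V) : Prop :=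
  exists Ti : V -> V, [/\ bounded_op Ti, cancel T Ti & cancel Ti T].

Definition compact_op (K : V -> V) : Prop :=
  bounded_op K /\
  forall u : nat -> V, (exists M : R, forall n, nrm (u n) <= M) ->
    exists (s : nat -> nat) (y : V),
      (forall n, (s n < s n.+1)%N) /\ vlim (fun n => K (u (s n))) y.

Definition hilbert_schmidt (T : V -> V) : Prop :=
  bounded_op T /\
  exists e : nat -> V, orthonormal_basis e /\ summable (fun n => nrm (T (e n)) ^+ 2).

Record op := Op { dom : V -> Prop ; act : V -> V }.

Definition linear_op (H : op) : Prop :=
  dom H 0 /\
  forall (a : R[i]) (x y : V), dom H x -> dom H y ->
    dom H (a *: x + y) /\ act H (a *: x + y) = a *: act H x + act H y.

Definition densely_defined (H : op) : Prop :=
  linear_op H /\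
  forall x : V, exists u : nat -> V, (forall n, dom H (u n)) /\ vlim u x.

(* Hs is the adjoint H^* of H (inner product linear in the 2nd entry):
   dom H^* = { y | exists z, forall x in dom H, <Hx, y> = <x, z> },
   <Hx, y> = <x, H^* y>. *)
Definition is_adjoint (H Hs : op) : Prop :=
  (forall y : V, dom Hs y <->
     exists z : V, forall x : V, dom H x -> ip (act H x) y = ip x z) /\
  (forall x y : V, dom H x -> dom Hs y -> ip (act H x) y = ip x (act Hs y)).

Definition is_metric (H Hs : op) (Theta : V -> V) : Prop :=
  bounded_selfadjoint Theta /\ nonnegative_op Theta /\
  exists Ti : V -> V, [/\ bounded_op Ti, cancel Theta Ti, cancel Ti Theta,
    (forall y : V, dom Hs y <-> dom H (Ti y)) &
    (forall y : V, dom Hs y -> act Hs y = Theta (act H (Ti y)))].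

Definition quasi_self_adjoint (H Hs : op) : Prop :=
  densely_defined H /\ is_adjoint H Hs /\ exists Theta : V -> V, is_metric H Hs Theta.

Definition is_resolvent (H : op) (lam : R[i]) (Rl : V -> V) : Prop :=
  [/\ bounded_op Rl,
      (forall x : V, dom H (Rl x) /\ act H (Rl x) - lam *: Rl x = x) &
      (forall y : V, dom H y -> Rl (act H y - lam *: y) = y)].

Definition in_spectrum (H : op) (lam : R[i]) : Prop :=
  ~ exists Rl : V -> V, is_resolvent H lam Rl.

Definition eigenvector (H : op) (lam : R[i]) (x : V) : Prop :=
  [/\ dom H x, x <> 0 & act H x = lam *: x].

Definition eigenvalue (H : op) (lam : R[i]) : Prop := exists x : V, eigenvector H lam x.

Definition purely_real_spectrum (H : op) : Prop :=
  forall lam : R[i], in_spectrum H lam -> lam \is Num.real.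

(* discrete spectrum = compact resolvent *)
Definition discrete_spectrum (H : op) : Prop :=
  exists (lam : R[i]) (Rl : V -> V), is_resolvent H lam Rl /\ compact_op Rl.

(* every eigenvalue has geometric multiplicity one (eigenvectors are
   proportional) and algebraic multiplicity one
   (ker (H - lam)^2 = ker (H - lam), i.e. no Jordan chains) *)
Definition simple_spectrum (H : op) : Prop :=
  forall lam : R[i], eigenvalue H lam ->
    (forall x y : V, eigenvector H lam x -> eigenvector H lam y ->
       exists c : R[i], y = c *: x) /\
    (forall x : V, dom H x -> dom H (act H x - lam *: x) ->
       act H (act H x - lam *: x) - lam *: (act H x - lam *: x) = 0 ->
       act H x = lam *: x).

End HilbertDefs.

(* Main.v *)
Require Import Defs.
From HB Require Import structures.
From mathcomp Require Import all_boot all_order all_algebra.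
From mathcomp Require Import reals.
From mathcomp Require Import complex.
From mathcomp Require Import classical_sets.
From mathcomp.algebra_tactics Require Import ring lra.
Set Implicit Arguments.
Unset Strict Implicit.
Import Order.TTheory GRing.Theory Num.Theory.
Local Open Scope ring_scope.


Section S.
Variable R : realType.
Local Open Scope complex_scope.
Definition sq (z : R[i]) : R := complex.Re z ^+ 2 + complex.Im z ^+ 2.
Lemma sqM (a b : R[i]) : sq (a * b) = sq a * sq b.
Proof. case: a => a1 a2; case: b => b1 b2; rewrite /sq /=. ring. Qed.
Lemma sqJ (a : R[i]) : sq (a^*) = sq a.
Proof. case: a => a1 a2; rewrite /sq /=. ring. Qed.
Lemma sqN (a : R[i]) : sq (- a) = sq a.
Proof. case: a => a1 a2; rewrite /sq /=. ring. Qed.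
Lemma sq_ge0 (a : R[i]) : 0 <= sq a.
Proof. rewrite /sq; apply: addr_ge0; apply: sqr_ge0. Qed.
Lemma sqD (a b : R[i]) : sq (a + b) <= 2 * sq a + 2 * sq b.
Proof. case: a => a1 a2; case: b => b1 b2; rewrite /sq /=.
have := sqr_ge0 (a1 - b1); have := sqr_ge0 (a2 - b2). nra. Qed.
Lemma sq_real (r : R) : sq (r%:C) = r ^+ 2.
Proof. rewrite /sq /=. ring. Qed.
Lemma Re_mulJ (a : R[i]) : complex.Re (a * a^*) = sq a.
Proof. case: a => a1 a2; rewrite /sq /=. ring. Qed.
Lemma ReD (a b : R[i]) : complex.Re (a + b) = complex.Re a + complex.Re b.
Proof. by case: a; case: b. Qed.
Lemma ReJ (a : R[i]) : complex.Re (a ^*) = complex.Re a.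
Proof. by case: a. Qed.
Lemma Re_realM (r : R) (a : R[i]) : complex.Re (r%:C * a) = r * complex.Re a.
Proof. case: a => a1 a2; rewrite /=. ring. Qed.
End S.
Section S2.
Variable R : realType.
Local Open Scope complex_scope.
Lemma conjcD' (a b : R[i]) : (a + b)^* = a^* + b^*.
Proof. case: a => a1 a2; case: b => b1 b2 /=. by simpc. Qed.
Lemma conjcM' (a b : R[i]) : (a * b)^* = a^* * b^*.
Proof. case: a => a1 a2; case: b => b1 b2 /=. simpc. apply/eqP; rewrite eq_complex /=; apply/andP; split; apply/eqP; ring. Qed.
Lemma conjcN' (a : R[i]) : (- a)^* = - a^*.
Proof. case: a => a1 a2 /=. by simpc. Qed.
End S2.
Lemma ReN (R : realType) (a : R[i]) : complex.Re (- a) = - complex.Re a.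
Proof. by case: a. Qed.
Lemma sq0 (R : realType) : sq (0 : R[i]) = 0.
Proof. by rewrite /sq /= expr0n /= addr0. Qed.
Section S3.
Variable R : realType.
Local Open Scope complex_scope.
Lemma realCD (a b : R) : (a + b)%:C = a%:C + b%:C :> R[i].
Proof. apply/eqP; rewrite eq_complex /= addr0 !eqxx. by []. Qed.
Lemma realCB (a b : R) : (a - b)%:C = a%:C - b%:C :> R[i].
Proof. apply/eqP; rewrite eq_complex /= oppr0 addr0 !eqxx. by []. Qed.
Lemma ReSq (z : R[i]) : complex.Re z ^+ 2 <= sq z.
Proof. rewrite /sq lerDl; exact: sqr_ge0. Qed.
Lemma sqB (a b : R[i]) : sq (a - b) <= 2 * sq a + 2 * sq b.
Proof. by rewrite -(sqN b); apply: sqD. Qed.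
End S3.
Lemma zmod_id2 (W : zmodType) (x p a t : W) : x - ((p + a) - t) = (x - p) + (t - a).
Proof. by rewrite opprB addrA opprD addrACA. Qed.
Lemma realC1 (R : realType) : ((1 : R)%:C)%C = 1 :> R[i].
Proof. by []. Qed.


Section IP.
Variables (R : realType) (V : lmodType R[i]) (ip : V -> V -> R[i]).
Hypothesis Hip : inner_product ip.

Lemma ipDZr x a y z : ip x (a *: y + z) = a * ip x y + ip x z.
Proof. by case: Hip. Qed.
Lemma ipJ x y : ip x y = (ip y x)^*%C.
Proof. by case: Hip. Qed.
Lemma ip_ge0 x : 0 <= ip x x.
Proof. by case: Hip. Qed.
Lemma ip_eq0 x : ip x x = 0 -> x = 0.
Proof. by case: Hip => _ _ _ h; apply: h. Qed.
Lemma ip0r x : ip x 0 = 0.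
Proof.
have := ipDZr x 1 0 0; rewrite scale1r addr0 mul1r => h.
by apply: (@addrI _ (ip x 0)); rewrite addr0 -h.
Qed.
Lemma ipDr x y z : ip x (y + z) = ip x y + ip x z.
Proof. by have := ipDZr x 1 y z; rewrite scale1r mul1r. Qed.
Lemma ipZr x a y : ip x (a *: y) = a * ip x y.
Proof. by rewrite -[a *: y]addr0 ipDZr ip0r addr0. Qed.
Lemma ipNr x y : ip x (- y) = - ip x y.
Proof. by rewrite -scaleN1r ipZr mulN1r. Qed.
Lemma ipBr x y z : ip x (y - z) = ip x y - ip x z.
Proof. by rewrite ipDr ipNr. Qed.
Lemma ip0l x : ip 0 x = 0.
Proof. by rewrite ipJ ip0r conjc0. Qed.
Lemma ipDl x y z : ip (y + z) x = ip y x + ip z x.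
Proof. by rewrite [LHS]ipJ ipDr conjcD' [ip y x]ipJ [ip z x]ipJ. Qed.
Lemma ipZl x a y : ip (a *: y) x = a^*%C * ip y x.
Proof. by rewrite [LHS]ipJ ipZr conjcM' [ip y x]ipJ. Qed.
Lemma ipNl x y : ip (- y) x = - ip y x.
Proof. by rewrite [LHS]ipJ ipNr conjcN' [ip y x]ipJ. Qed.
Lemma ipBl x y z : ip (y - z) x = ip y x - ip z x.
Proof. by rewrite ipDl ipNl. Qed.
Lemma ip_sumr x n (F : 'I_n -> V) : ip x (\sum_(k < n) F k) = \sum_(k < n) ip x (F k).
Proof.
elim/big_rec2: _ => [|i y1 y2 _ <-]; first exact: ip0r.
by rewrite ipDr.
Qed.
Lemma ip_suml x n (F : 'I_n -> V) : ip (\sum_(k < n) F k) x = \sum_(k < n) ip (F k) x.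
Proof.
elim/big_rec2: _ => [|i y1 y2 _ <-]; first exact: ip0l.
by rewrite ipDl.
Qed.

Definition q x := complex.Re (ip x x).

Lemma qE x : ip x x = (q x)%:C%C.
Proof.
have := ip_ge0 x; rewrite /q; case: (ip x x) => a b.
rewrite lecE /= => /andP [/eqP -> _]. by [].
Qed.
Lemma q_ge0 x : 0 <= q x.
Proof. by have := ip_ge0 x; rewrite qE ler0c. Qed.
Lemma q_eq0 x : q x = 0 -> x = 0.
Proof. by move=> h; apply: ip_eq0; rewrite qE h. Qed.
Lemma qD x y : q (x + y) = q x + q y + 2 * complex.Re (ip x y).
Proof.
rewrite /q ipDl !ipDr [ip y x]ipJ !ReD ReJ. ring.
Qed.
Lemma qZ a x : q (a *: x) = sq a * q x.
Proof.
rewrite /q ipZl ipZr qE mulrA mulrC -Re_mulJ.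
case: a => a1 a2 /=. rewrite /=. ring.
Qed.
Lemma qN x : q (- x) = q x.
Proof. by rewrite /q ipNl ipNr opprK. Qed.
Lemma q_le2 x y : q (x + y) <= 2 * q x + 2 * q y.
Proof.
have h1 := qD x y; have h2 := qD x (- y).
rewrite qN ipNr ReN in h2.
have := q_ge0 (x - y).
lra.
Qed.
Lemma nrm2 x : nrm ip x ^+ 2 = q x.
Proof. by rewrite /nrm sqr_sqrtr // q_ge0. Qed.
Lemma nrm_ge0 x : 0 <= nrm ip x.
Proof. exact: sqrtr_ge0. Qed.

Lemma CS x y : sq (ip x y) <= q x * q y.
Proof.
have [hx|hx] := eqVneq (q x) 0.
  by rewrite hx mul0r (q_eq0 hx) ip0l sq0.
have qx0 : 0 < q x by rewrite lt_def hx q_ge0.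
have := q_ge0 ((q x)%:C%C *: y + (- ip x y) *: x).
rewrite qD !qZ sq_real sqN ipZl ipZr conjc_real.
have -> : complex.Re ((q x)%:C%C * (- ip x y * ip y x)) = - (q x * sq (ip x y)).
  rewrite [ip y x]ipJ -Re_mulJ; case: (ip x y) => a b /=. ring.
move=> h.
have : 0 <= q x * (q x * q y - sq (ip x y)) by lra.
rewrite pmulr_rge0 // subr_ge0. by [].
Qed.

End IP.


Section Real.
Variable R : realType.

Lemma rlim_add (u v : nat -> R) a b : rlim u a -> rlim v b ->
  rlim (fun n => u n + v n) (a + b).
Proof.
move=> hu hv e e0.
have e20 : 0 < e / 2 by rewrite divr_gt0.
have [N1 h1] := hu _ e20; have [N2 h2] := hv _ e20.
exists (maxn N1 N2) => n hn.
have := h1 n (leq_trans (leq_maxl _ _) hn); have := h2 n (leq_trans (leq_maxr _ _) hn).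
move=> a2 a1.
have -> : u n + v n - (a + b) = (u n - a) + (v n - b) by ring.
apply: (le_lt_trans (ler_normD _ _)).
have -> : e = e / 2 + e / 2 by field.
exact: ltrD.
Qed.

Lemma rlim_sum (M : nat) (F : nat -> nat -> R) (l : nat -> R) :
  (forall m, rlim (F m) (l m)) ->
  rlim (fun N => \sum_(m < M) F m N) (\sum_(m < M) l m).
Proof.
move=> h; elim: M => [|M IH].
  move=> e e0; exists 0%N => n _; by rewrite !big_ord0 subrr normr0.
have := rlim_add IH (h M).
move=> h2 e e0; have [N hN] := h2 e e0; exists N => n hn.
by rewrite !big_ord_recr /=; apply: hN.
Qed.

Lemma rlim_le (u : nat -> R) l B : rlim u l -> (forall n, u n <= B) -> l <= B.
Proof.
move=> hu hB; rewrite leNgt; apply/negP => hlt.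
have lB : 0 < l - B by rewrite subr_gt0.
have [N hN] := hu (l - B) lB.
have := hN N (leqnn N); have := hB N.
move=> h1 h2. have := ler_norm (l - u N). rewrite distrC in h2. lra.
Qed.

Lemma psum_mono (u : nat -> R) : (forall n, 0 <= u n) ->
  forall N n, (N <= n)%N -> \sum_(k < N) u k <= \sum_(k < n) u k.
Proof.
move=> hu N n /subnK <-; elim: (n - N)%N => [|d IH]; first by rewrite add0n.
rewrite addSn big_ord_recr /=; apply: (le_trans IH); rewrite lerDl; exact: hu.
Qed.

Lemma summable_bound (u : nat -> R) : (forall n, 0 <= u n) -> summable u ->
  exists B, forall N, \sum_(k < N) u k <= B.
Proof.
move=> hu [l hl]; exists l => N; rewrite leNgt; apply/negP => hlt.
have lB : 0 < \sum_(k < N) u k - l by rewrite subr_gt0.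
have [N1 hN] := hl _ lB.
have := hN (maxn N N1) (leq_maxr _ _).
have := psum_mono hu (leq_maxl N N1).
move=> h1 h2. have := ler_norm (\sum_(k < maxn N N1) u k - l). lra.
Qed.

Lemma bound_summable (u : nat -> R) B : (forall n, 0 <= u n) ->
  (forall N, \sum_(k < N) u k <= B) -> summable u.
Proof.
move=> hu hB.
pose E := fun r : R => exists N, r = \sum_(k < N) u k.
have hE : has_sup E.
  split; first by exists (\sum_(k < 0) u k), 0%N.
  by exists B => r [N ->].
exists (sup E) => e e0.
have [r [N ->] hr] := sup_adherent e0 hE.
exists N => n hn.
have h1 := psum_mono hu hn.
have h2 : \sum_(k < n) u k <= sup E by apply: sup_upper_bound => //; exists n.
rewrite ler0_norm ?subr_le0 //. lra.
Qed.

End Real.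
Section Real2.
Variable R : realType.
Lemma rlim_ext (u v : nat -> R) l : (forall n, u n = v n) -> rlim u l -> rlim v l.
Proof. move=> h hu e e0; have [N hN] := hu e e0; exists N => n hn; rewrite -h; exact: hN. Qed.
Lemma summable_ext (u v : nat -> R) : (forall n, u n = v n) -> summable u -> summable v.
Proof.
move=> h [l hl]; exists l; apply: rlim_ext hl => n; apply: eq_bigr => k _; exact: h.
Qed.
Lemma rlim_le_scaled (u : nat -> R) l c B : 0 < c -> rlim u l ->
  (forall n, c * u n <= B) -> c * l <= B.
Proof.
move=> c0 hu hB; rewrite -ler_pdivlMl //; apply: rlim_le hu _ => n.
by rewrite ler_pdivlMl.
Qed.
Lemma term_le_sum (u : nat -> R) m : (forall n, 0 <= u n) -> u m <= \sum_(k < m.+1) u k.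
Proof.
move=> hu; rewrite big_ord_recr /= lerDr; apply: sumr_ge0 => k _; exact: hu.
Qed.
End Real2.


Section ON.
Variables (R : realType) (V : lmodType R[i]) (ip : V -> V -> R[i]).
Hypothesis Hip : inner_product ip.
Variable e : nat -> V.
Hypothesis He : Defs.orthonormal ip e.

Lemma sum_delta N k (F : nat -> R[i]) : (k < N)%N ->
  \sum_(j < N) F j * ((k == j)%:R) = F k.
Proof.
move=> hk; rewrite (bigD1 (Ordinal hk)) //= eqxx mulr1 big1 ?addr0 //.
move=> j hj; have -> : (k == j) = false.
  apply/negP => /eqP hkj; move/negP: hj; apply; apply/eqP; apply: val_inj => /=; by rewrite hkj.
by rewrite mulr0.
Qed.

Lemma ip_e_comb N (c : nat -> R[i]) k : (k < N)%N ->
  ip (e k) (\sum_(j < N) c j *: e j) = c k.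
Proof.
move=> hk; rewrite ip_sumr //.
under eq_bigr => j _ do rewrite ipZr // He.
exact: sum_delta.
Qed.

Definition tr N x := \sum_(k < N) ip (e k) x *: e k.

Lemma resid_e N x k : (k < N)%N -> ip (x - tr N x) (e k) = 0.
Proof.
move=> hk; rewrite ipBl // [ip x (e k)](ipJ Hip) [ip (tr N x) (e k)](ipJ Hip).
by rewrite /tr (ip_e_comb (fun j => ip (e j) x)) // subrr.
Qed.

Lemma resid_comb N x (d : nat -> R[i]) :
  ip (x - tr N x) (\sum_(k < N) d k *: e k) = 0.
Proof.
rewrite ip_sumr // big1 // => k _; by rewrite ipZr // resid_e // mulr0.
Qed.

Lemma Re_sum N (F : 'I_N -> R[i]) : complex.Re (\sum_(k < N) F k) = \sum_(k < N) complex.Re (F k).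
Proof.
elim/big_rec2: _ => [|i y1 y2 _ <-]; first by [].
by rewrite ReD.
Qed.

Lemma pyth N x : q ip x = \sum_(k < N) sq (ip (e k) x) + q ip (x - tr N x).
Proof.
have -> : q ip x = q ip ((x - tr N x) + tr N x) by rewrite subrK.
rewrite qD // {2}/tr (resid_comb _ _ (fun j => ip (e j) x)) /=.
have -> : q ip (tr N x) = \sum_(k < N) sq (ip (e k) x).
  rewrite /q {2}/tr ip_sumr // Re_sum.
  apply: eq_bigr => k _; rewrite ipZr // [ip (tr N x) (e k)](ipJ Hip) /tr (ip_e_comb (fun j => ip (e j) x)) //.
  by rewrite Re_mulJ.
ring.
Qed.

Lemma bessel N x : \sum_(k < N) sq (ip (e k) x) <= q ip x.
Proof. rewrite (pyth N x) lerDl; exact: q_ge0. Qed.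

Lemma parseval x : is_basis ip e ->
  rlim (fun N => \sum_(k < N) sq (ip (e k) x)) (q ip x).
Proof.
move=> /(_ x) [c [hc _]] eps eps0.
have s0 : 0 < Num.sqrt eps by rewrite sqrtr_gt0.
have [N hN] := hc _ s0; exists N => n hn.
have := hN n hn; rewrite subr0 ger0_norm; last exact: sqrtr_ge0.
rewrite /nrm ltr_sqrt // => hq.
set s := \sum_(k < n) c k *: e k.
have e1 : x - s = (x - tr n x) + \sum_(k < n) (ip (e k) x - c k) *: e k.
  rewrite /tr /s -addrA; congr (_ + _).
  under [X in _ = _ + X]eq_bigr => k _ do rewrite scalerBl.
  by rewrite sumrB addKr.
have h1 : q ip (x - s) = q ip (x - tr n x) + q ip (\sum_(k < n) (ip (e k) x - c k) *: e k).
  by rewrite e1 qD // (resid_comb _ _ (fun k => ip (e k) x - c k)) /=; ring.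
have h2 : q ip (s - x) = q ip (x - s) by rewrite -opprB qN.
have h3 := q_ge0 Hip (\sum_(k < n) (ip (e k) x - c k) *: e k).
have h4 := pyth n x.
have h5 := q_ge0 Hip (x - tr n x).
rewrite ler0_norm; last by lra.
lra.
Qed.

End ON.


Lemma zmod_id1 (W : zmodType) (a b c d : W) : (a + b) - (c + d) = (a - c) + (b - d).
Proof. by rewrite opprD addrACA. Qed.

Section Main.
Variables (R : realType) (V : lmodType R[i]) (ip : V -> V -> R[i]).
Hypothesis Hip : inner_product ip.
Variables (psi chi phi : nat -> V).
Hypothesis Hchi : orthonormal_basis ip chi.
Hypothesis Hbiorth : forall m n : nat, ip (psi m) (phi n) = (n == m)%:R.
Hypothesis Hphi_norm : forall n : nat, nrm ip (phi n) = 1.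
Variables (Theta : V -> V) (C : nat -> R) (Cm M S : R).
Hypothesis Tlin : forall (a : R[i]) (x y : V), Theta (a *: x + y) = a *: Theta x + Theta y.
Hypothesis HM : forall x : V, nrm ip (Theta x) <= M * nrm ip x.
Hypothesis Tsa : forall x y : V, ip (Theta x) y = ip x (Theta y).
Hypothesis HTheta_form : forall x : V,
     vseries ip (fun n => ((C n)%:C)%C * ip (phi n) x *: phi n) (Theta x).
Hypothesis HCm : 0 < Cm.
Hypothesis HC : forall n : nat, Cm <= C n.
Hypothesis HS : forall N, \sum_(k < N) q ip (psi k - chi k) <= S.

Local Notation d k := (psi k - chi k).
Local Notation T x := (x - Theta x).

Lemma chi_on : Defs.orthonormal ip chi. Proof. by case: Hchi. Qed.
Lemma q_chi m : q ip (chi m) = 1.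
Proof. by rewrite /q chi_on eqxx. Qed.
Lemma q_phi m : q ip (phi m) = 1.
Proof. by rewrite -nrm2 // Hphi_norm expr1n. Qed.
Lemma psiE m : psi m = chi m + d m.
Proof. by rewrite addrC subrK. Qed.
Lemma S_ge0 : 0 <= S.
Proof. by apply: le_trans (HS 0); rewrite big_ord0. Qed.
Lemma qd_le m : q ip (d m) <= S.
Proof.
have h := @term_le_sum R (fun k => q ip (psi k - chi k)) m (fun n => q_ge0 Hip _).
exact: le_trans h (HS _).
Qed.

Lemma ThD x y : Theta (x + y) = Theta x + Theta y.
Proof. by have := Tlin 1 x y; rewrite !scale1r. Qed.
Lemma Th0 : Theta 0 = 0.
Proof.
have := ThD 0 0; rewrite addr0 => h.
by apply: (@addrI _ (Theta 0)); rewrite addr0 -h.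
Qed.
Lemma ThN x : Theta (- x) = - Theta x.
Proof. by rewrite -scaleN1r -[_ *: x]addr0 Tlin Th0 addr0 scaleN1r. Qed.
Lemma ThB x y : Theta (x - y) = Theta x - Theta y.
Proof. by rewrite ThD ThN. Qed.
Lemma qTh x : q ip (Theta x) <= M ^+ 2 * q ip x.
Proof.
rewrite -!nrm2 //; have := HM x; have := nrm_ge0 ip (Theta x); have := nrm_ge0 ip x.
move=> h1 h2 h3; rewrite -exprMn; nra.
Qed.
Lemma TD x y : T (x + y) = T x + T y.
Proof. by rewrite ThD zmod_id1. Qed.
Lemma qT x : q ip (T x) <= (2 + 2 * M ^+ 2) * q ip x.
Proof.
apply: le_trans (q_le2 Hip _ _) _; rewrite qN //.
have := qTh x; lra.
Qed.
Lemma Tsa' x y : ip (T x) y = ip x (T y).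
Proof. by rewrite ipBl // ipBr // Tsa. Qed.

Lemma qpsi m : q ip (psi m) <= 2 * S + 2.
Proof.
rewrite psiE; apply: le_trans (q_le2 Hip _ _) _; rewrite q_chi.
have := qd_le m; lra.
Qed.

Lemma F1 m : Theta (psi m) = (C m)%:C%C *: phi m.
Proof.
have hv := HTheta_form (psi m).
have key : forall n, (m < n)%N ->
   \sum_(k < n) (((C k)%:C)%C * ip (phi k) (psi m)) *: phi k = (C m)%:C%C *: phi m.
  move=> n hn; rewrite (bigD1 (Ordinal hn)) //= big1 ?addr0.
    by rewrite (ipJ Hip) Hbiorth eqxx conjc1 mulr1.
  move=> j hj; rewrite (ipJ Hip) Hbiorth.
  have -> : (j == m :> nat) = false.
    apply/negP => /eqP hkj; move/negP: hj; apply; apply/eqP; apply: val_inj => /=; by rewrite hkj.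
  by rewrite conjc0 mulr0 scale0r.
have h0 : q ip ((C m)%:C%C *: phi m - Theta (psi m)) = 0.
  apply/eqP; rewrite eq_le q_ge0 // andbT; apply/ler_addgt0Pr => eps eps0.
  rewrite add0r.
  have s0 : 0 < Num.sqrt eps by rewrite sqrtr_gt0.
  have [N hN] := hv _ s0.
  have := hN (maxn N m.+1) (leq_maxl _ _); rewrite key ?leq_maxr // subr0.
  rewrite ger0_norm; last exact: sqrtr_ge0.
  rewrite /nrm ltr_sqrt // => h; exact: ltW.
by apply/eqP; rewrite eq_sym -subr_eq0; apply/eqP; apply: (q_eq0 Hip).
Qed.


Lemma bessel_phi y N : Cm ^+ 2 * \sum_(m < N) sq (ip (phi m) y) <= (2 + 2 * S) * M ^+ 2 * q ip y.
Proof.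
set z := Theta y.
have per m : Cm ^+ 2 * sq (ip (phi m) y) <= 2 * sq (ip (chi m) z) + (2 * q ip z) * q ip (d m).
  have e1 : C m ^+ 2 * sq (ip (phi m) y) = sq (ip (psi m) z).
    by rewrite /z -Tsa F1 ipZl // sqM sqJ sq_real.
  have h1 : Cm ^+ 2 * sq (ip (phi m) y) <= C m ^+ 2 * sq (ip (phi m) y).
    apply: ler_wpM2r; first exact: sq_ge0.
    have := HC m; have := HCm; nra.
  apply: le_trans h1 _; rewrite e1 {1}psiE ipDl //.
  apply: le_trans (sqD _ _) _.
  have := CS Hip (d m) z; lra.
rewrite mulr_sumr; apply: le_trans; first by apply: ler_sum => m _; exact: per.
rewrite big_split /= -!mulr_sumr.
have := bessel Hip chi_on N z; have hd := HS N; have := qTh y; have hz := q_ge0 Hip z; have hS := S_ge0.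
have p1 : 2 * q ip z * (\sum_(k < N) q ip (d k)) <= 2 * q ip z * S.
  by apply: ler_wpM2l => //; lra.
have p2 : (2 + 2 * S) * q ip z <= (2 + 2 * S) * (M ^+ 2 * q ip y).
  by apply: ler_wpM2l; [lra | exact: qTh].
lra.
Qed.

Lemma phi_chi_bound N : Cm ^+ 2 * \sum_(m < N) q ip (phi m - chi m) <= (2 + 2 * S) * M ^+ 2 * S.
Proof.
pose F m K := \sum_(k < K) sq (ip (phi m) (d k)).
have hF : forall m, rlim (F m) (q ip (phi m - chi m)).
  move=> m; apply: rlim_ext (parseval Hip chi_on (phi m - chi m) (proj2 Hchi)) => K.
  apply: eq_bigr => k _.
  rewrite ipBr // chi_on.
  have -> : ((k == m :> nat)%:R : R[i]) = ip (psi k) (phi m) by rewrite Hbiorth eq_sym.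
  by rewrite -ipBl // -opprB ipNl // sqN (ipJ Hip) sqJ.
have HCm2 : 0 < Cm ^+ 2 by rewrite exprn_gt0.
apply: (rlim_le_scaled HCm2 (rlim_sum N hF)) => K.
rewrite /F exchange_big /= mulr_sumr.
apply: le_trans; first by apply: ler_sum => k _; exact: (bessel_phi (d k) N).
rewrite -mulr_sumr; apply: ler_wpM2l; last exact: HS.
apply: mulr_ge0; [have := S_ge0; lra | exact: sqr_ge0].
Qed.


Lemma T_bounded : bounded_op ip (fun x => x - Theta x).
Proof.
split.
  by move=> a x y; rewrite Tlin scalerBr zmod_id1.
exists (Num.sqrt (2 + 2 * M ^+ 2)) => x.
have hK : 0 <= 2 + 2 * M ^+ 2 by have := sqr_ge0 M; lra.
rewrite /nrm -sqrtrM //; apply: ler_wsqrtr; exact: qT.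
Qed.

Lemma dir2 (alpha : nat -> R) : (forall n, C n = 1 + alpha n) ->
  summable (fun n => alpha n ^+ 2) -> hilbert_schmidt ip (fun x => x - Theta x).
Proof.
move=> hal hsum; split; first exact: T_bounded.
exists chi; split; first exact: Hchi.
have [A hA] := summable_bound (fun n => sqr_ge0 (alpha n)) hsum.
pose BB := (2 + 2 * S) * M ^+ 2 * S / Cm ^+ 2.
have HCm2 : 0 < Cm ^+ 2 by rewrite exprn_gt0.
have hpc N : \sum_(m < N) q ip (phi m - chi m) <= BB.
  by rewrite /BB ler_pdivlMr // mulrC; exact: phi_chi_bound.
have per m : nrm ip (chi m - Theta (chi m)) ^+ 2 <=
    2 * q ip (phi m - chi m) + 4 * M ^+ 2 * q ip (d m) + 4 * alpha m ^+ 2.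
  rewrite nrm2 //.
  have ec : chi m = psi m - d m by rewrite opprB addrC subrK.
  have eT : chi m - Theta (chi m) = (chi m - phi m) + (Theta (d m) - (alpha m)%:C%C *: phi m).
    rewrite {2}ec ThB F1 hal realCD realC1 scalerDl scale1r.
    exact: zmod_id2.
  rewrite eT; apply: le_trans (q_le2 Hip _ _) _.
  have h1 := q_le2 Hip (Theta (d m)) (- ((alpha m)%:C%C *: phi m)).
  rewrite qN // qZ // sq_real q_phi mulr1 in h1.
  have h2 := qTh (d m).
  have h3 : q ip (chi m - phi m) = q ip (phi m - chi m) by rewrite -opprB qN.
  lra.
apply: (bound_summable (B := 2 * BB + 4 * M ^+ 2 * S + 4 * A)) => [n|N]; first exact: sqr_ge0.
apply: le_trans; first by apply: ler_sum => m _; exact: per.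
rewrite !big_split /= -!mulr_sumr.
have := hpc N; have := hA N; have := HS N.
have hM : 0 <= 4 * M ^+ 2 by have := sqr_ge0 M; lra.
move=> h1 h2 h3.
have := ler_wpM2l hM h1. lra.
Qed.


Lemma Tchi_bound (e : nat -> V) SE : Defs.orthonormal ip e -> is_basis ip e ->
  (forall N, \sum_(n < N) q ip (T (e n)) <= SE) ->
  forall N, \sum_(m < N) q ip (T (chi m)) <= SE.
Proof.
move=> eon eb hSE N.
pose F m K := \sum_(n < K) sq (ip (chi m) (T (e n))).
have hF : forall m, rlim (F m) (q ip (T (chi m))).
  move=> m; apply: rlim_ext (parseval Hip eon (T (chi m)) eb) => K.
  apply: eq_bigr => n _.
  by rewrite -Tsa' (ipJ Hip) sqJ.
apply: (rlim_le (rlim_sum N hF)) => K.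
rewrite /F exchange_big /=.
apply: le_trans; first by apply: ler_sum => n _; exact: (bessel Hip chi_on N (T (e n))).
exact: hSE.
Qed.

Lemma alpha_bound m :
  (C m - 1) ^+ 2 <= (4 * S + 16 + 8 * (2 + 2 * M ^+ 2) + 4 * (2 + 2 * M ^+ 2) * (2 * S + 2)) * q ip (d m)
                    + 8 * q ip (T (chi m)).
Proof.
set KT := 2 + 2 * M ^+ 2.
have hKT : 0 <= KT by rewrite /KT; have := sqr_ge0 M; lra.
have e1 : ((C m - 1)%:C)%C = (ip (psi m) (psi m) - 1) - ip (psi m) (T (psi m)).
  rewrite ipBr // F1 ipZr // Hbiorth eqxx mulr1 realCB realC1. ring.
have h1 : (C m - 1) ^+ 2 <= 2 * sq (ip (psi m) (psi m) - 1) + 2 * sq (ip (psi m) (T (psi m))).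
  by rewrite -sq_real e1; apply: sqB.
have h2 : sq (ip (psi m) (psi m) - 1) = (q ip (psi m) - 1) ^+ 2.
  by rewrite qE // -realC1 -realCB sq_real.
have h3 : q ip (psi m) = 1 + q ip (d m) + 2 * complex.Re (ip (chi m) (d m)).
  by rewrite {1}psiE qD // q_chi.
have h9 : complex.Re (ip (chi m) (d m)) ^+ 2 <= q ip (d m).
  apply: le_trans (ReSq _) _; apply: le_trans (CS Hip _ _) _; by rewrite q_chi mul1r.
have hqd := q_ge0 Hip (d m); have hqdS := qd_le m.
have hA : (q ip (psi m) - 1) ^+ 2 <= (2 * S + 8) * q ip (d m).
  rewrite h3.
  have := sqr_ge0 (q ip (d m) - 2 * complex.Re (ip (chi m) (d m))).
  have := mulr_ge0 hqd (ltac:(by rewrite subr_ge0) : 0 <= S - q ip (d m)).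
  nra.
have eip : forall w, ip (psi m) w = ip (chi m) w + ip (d m) w.
  by move=> w; rewrite -ipDl // -psiE.
have eT : T (psi m) = T (chi m) + T (d m) by rewrite -TD -psiE.
have h4 : sq (ip (psi m) (T (psi m))) <= 2 * sq (ip (chi m) (T (psi m))) + 2 * sq (ip (d m) (T (psi m))).
  by rewrite eip; apply: sqD.
have h5 : sq (ip (chi m) (T (psi m))) <= 2 * q ip (T (chi m)) + 2 * KT * q ip (d m).
  rewrite eT ipDr //; apply: le_trans (sqD _ _) _.
  have := CS Hip (chi m) (T (chi m)); have := CS Hip (chi m) (T (d m)); rewrite q_chi !mul1r.
  have := qT (d m). rewrite -/KT. lra.
have h6 : sq (ip (d m) (T (psi m))) <= KT * (2 * S + 2) * q ip (d m).
  apply: le_trans (CS Hip _ _) _.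
  have := qT (psi m); have := qpsi m; rewrite -/KT => a b.
  have c : q ip (T (psi m)) <= KT * (2 * S + 2).
    apply: le_trans b _; apply: ler_wpM2l => //.
  rewrite mulrC; apply: ler_wpM2r => //.
lra.
Qed.

Lemma dir1 : hilbert_schmidt ip (fun x => x - Theta x) ->
  exists alpha : nat -> R, (forall n, C n = 1 + alpha n) /\ summable (fun n => alpha n ^+ 2).
Proof.
move=> [_ [e [[eon eb] hsum]]].
have hsum' := summable_ext (fun n => nrm2 Hip (T (e n))) hsum.
have [SE hSE] := summable_bound (fun n => q_ge0 Hip (T (e n))) hsum'.
have hTc := Tchi_bound eon eb hSE.
exists (fun n => C n - 1); split; first by move=> n; ring.
have hK1 : 0 <= (4 * S + 16 + 8 * (2 + 2 * M ^+ 2) + 4 * (2 + 2 * M ^+ 2) * (2 * S + 2)).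
  have hS := S_ge0; have hM := sqr_ge0 M.
  have hA : 0 <= 2 + 2 * M ^+ 2 by lra.
  have hB : 0 <= 2 * S + 2 by lra.
  have := mulr_ge0 hA hB; lra.
apply: (bound_summable (B := (4 * S + 16 + 8 * (2 + 2 * M ^+ 2) + 4 * (2 + 2 * M ^+ 2) * (2 * S + 2)) * S + 8 * SE)) => [n|N]; first exact: sqr_ge0.
apply: le_trans; first by apply: ler_sum => m _; exact: alpha_bound.
rewrite big_split /= -!mulr_sumr.
set K1 := (4 * S + 16 + 8 * (2 + 2 * M ^+ 2) + 4 * (2 + 2 * M ^+ 2) * (2 * S + 2)) in hK1 *.
have := ler_wpM2l hK1 (HS N); have := hTc N. lra.
Qed.

End Main.

Theorem lemma4p1 (R : realType) (V : lmodType R[i]) (ip : V -> V -> R[i])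
  (HV : separable_inf_dim_hilbert ip)
  (H Hs : op V)
  (Hqsa : quasi_self_adjoint ip H Hs)
  (Hreal : purely_real_spectrum ip H)
  (Hsimple : simple_spectrum H)
  (Hdiscrete : discrete_spectrum ip H)
  (psi chi phi : nat -> V)
  (Hpsi_eig : forall n : nat, exists lam : R[i], eigenvector H lam (psi n))
  (Hpsi_all : forall (lam : R[i]) (x : V), eigenvector H lam x ->
                exists (n : nat) (c : R[i]), x = c *: psi n)
  (Hpsi_basis : is_basis ip psi)
  (Hchi : orthonormal_basis ip chi)
  (Hclose : summable (fun n => nrm ip (psi n - chi n) ^+ 2))
  (Hphi_eig : forall n : nat, exists mu : R[i], eigenvector Hs mu (phi n))
  (Hbiorth : forall m n : nat, ip (psi m) (phi n) = (n == m)%:R)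
  (Hphi_norm : forall n : nat, nrm ip (phi n) = 1)
  (Theta : V -> V) (C : nat -> R) (Cm Cp : R)
  (HTheta_metric : is_metric ip H Hs Theta)
  (HTheta_form : forall x : V,
     vseries ip (fun n => ((C n)%:C)%C * ip (phi n) x *: phi n) (Theta x))
  (HCm : 0 < Cm) (HCmp : Cm <= Cp)
  (HC : forall n : nat, Cm <= C n <= Cp) :
  hilbert_schmidt ip (fun x => x - Theta x) <->
  exists alpha : nat -> R,
    (forall n : nat, C n = 1 + alpha n) /\ summable (fun n => alpha n ^+ 2).
Proof.
case: HV => Hip _ _ _.
move: HTheta_metric => [[[Tlin [M HM]] Tsa] _].
have hC' : forall n, Cm <= C n by move=> n; case/andP: (HC n).
have hcl := summable_ext (fun n => nrm2 Hip (psi n - chi n)) Hclose.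
have [S hS] := summable_bound (fun n => q_ge0 Hip (psi n - chi n)) hcl.
split.
  move=> hHS; exact: (dir1 Hip Hchi Hbiorth Tlin HM Tsa HTheta_form hS hHS).
move=> [alpha [h1 h2]]; exact: (dir2 Hip Hchi Hbiorth Hphi_norm Tlin HM Tsa HTheta_form HCm hC' hS h1 h2).
Qed.
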